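(* Let $n$ run over positive integers such that $m=n^2+1$ satisfies $r_2(m)\le32$, and let $\lambda=m+\delta$ with $0<|\delta|<1/10$; put $R=\sqrt\lambda$ and $w=(0,2)$. Then, for $R$ sufficiently large, $$\sum_{v\in\mathbb{Z}^2}C(v,w)\ \ge\ \frac{2}{\delta^2}+O\Big(\frac{1}{|\delta|}\Big)+\sum_{v\in V_2}S_w(v),$$ with an absolute implied constant.
   Context: $r_2(m)=\#\{\xi\in\mathbb{Z}^2:|\xi|^2=m\}$. For $v\in\mathbb{Z}^2$, $c(v)=\frac{1}{|v|^2-\lambda}$ and $C(v,w)=c(v)c(v+w)$. $V_2=\{v\in\mathbb{Z}^2: C(v,w)<0,\ |v|^2\ne m,\ |v+w|^2\ne m,\ \sqrt R/2\le|\langle v,w\rangle|\le3R\}$. For $v\in\mathbb{Z}^2$, let $\operatorname{Nbr}_w(v)=\{C(v-w,w)+C(v,w),\ C(v,w)+C(v+w,w)\}$ and let $S_w(v)$ be the element of $\operatorname{Nbr}_w(v)$ of smallest absolute value (the smaller one in case of a tie). *)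

(* Defs.v *)
From Stdlib Require Import Reals ZArith List Lra.
Open Scope R_scope.

Definition Z2 := (Z * Z)%type.

Definition norm2 (v : Z2) : Z := (fst v * fst v + snd v * snd v)%Z.
Definition addZ2 (v w : Z2) : Z2 := (fst v + fst w, snd v + snd w)%Z.
Definition subZ2 (v w : Z2) : Z2 := (fst v - fst w, snd v - snd w)%Z.
Definition dotZ2 (v w : Z2) : Z := (fst v * fst w + snd v * snd w)%Z.

Definition Zrange (N : nat) : list Z :=
  map (fun k => (Z.of_nat k - Z.of_nat N)%Z) (seq 0 (2 * N + 1)).

(* r_2(m) = #{xi in Z^2 : |xi|^2 = m}; all such xi lie in [-|m|,|m|]^2 *)
Definition r2 (m : Z) : nat :=
  length (filter (fun p : Z2 => Z.eqb (norm2 p) m)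
                 (list_prod (Zrange (Z.abs_nat m)) (Zrange (Z.abs_nat m)))).

Definition c (lam : R) (v : Z2) : R := / (IZR (norm2 v) - lam).
Definition CC (lam : R) (v w : Z2) : R := c lam v * c lam (addZ2 v w).

(* S_w(v): element of Nbr_w(v) of smallest absolute value (smaller one on ties) *)
Definition Sw (lam : R) (w v : Z2) : R :=
  let a := CC lam (subZ2 v w) w + CC lam v w in
  let b := CC lam v w + CC lam (addZ2 v w) w in
  if Rlt_dec (Rabs a) (Rabs b) then a
  else if Rlt_dec (Rabs b) (Rabs a) then b
  else Rmin a b.

Definition inV2 (lam : R) (m : Z) (RR : R) (w v : Z2) : Prop :=
  CC lam v w < 0 /\ norm2 v <> m /\ norm2 (addZ2 v w) <> m /\
  sqrt RR / 2 <= Rabs (IZR (dotZ2 v w)) <= 3 * RR.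

Definition inV2_dec (lam : R) (m : Z) (RR : R) (w v : Z2) :
  {inV2 lam m RR w v} + {~ inV2 lam m RR w v}.
Proof.
  unfold inV2.
  destruct (Rlt_dec (CC lam v w) 0) as [h1|h1]; [|right; tauto].
  destruct (Z.eq_dec (norm2 v) m) as [h2|h2]; [right; tauto|].
  destruct (Z.eq_dec (norm2 (addZ2 v w)) m) as [h3|h3]; [right; tauto|].
  destruct (Rle_dec (sqrt RR / 2) (Rabs (IZR (dotZ2 v w)))) as [h4|h4]; [|right; tauto].
  destruct (Rle_dec (Rabs (IZR (dotZ2 v w))) (3 * RR)) as [h5|h5]; [|right; tauto].
  left; tauto.
Defined.

Definition box_sum (f : Z2 -> R) (N : nat) : R :=
  fold_right Rplus 0
    (map f (list_prod (Zrange N) (Zrange N))).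

(* lattice sum over Z^2, as limit of square partial sums
   (agrees with the unconditional sum for absolutely summable f) *)
Definition lattice_sum_is (f : Z2 -> R) (L : R) : Prop :=
  Un_cv (box_sum f) L.

Definition SwV2 (lam : R) (m : Z) (RR : R) (w v : Z2) : R :=
  if inV2_dec lam m RR w v then Sw lam w v else 0.

(* Main.v *)
Require Import Defs.
From Stdlib Require Import Reals ZArith List Lra Lia.
Import ListNotations.
Open Scope R_scope.

Fixpoint sumL {X : Type} (l : list X) (f : X -> R) : R :=
  match l with nil => 0 | x :: t => f x + sumL t f end.

Lemma sumL_app {X} (l1 l2 : list X) f : sumL (l1 ++ l2) f = sumL l1 f + sumL l2 f.
Proof. induction l1; simpl; [lra|rewrite IHl1; lra]. Qed.

Lemma sumL_map {X Y} (g : X -> Y) l f : sumL (map g l) f = sumL l (fun x => f (g x)).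
Proof. induction l; simpl; [lra|rewrite IHl; lra]. Qed.

Lemma sumL_ext_in {X} (l : list X) f g : (forall x, In x l -> f x = g x) -> sumL l f = sumL l g.
Proof. induction l; simpl; intros H; [lra|]. rewrite H by auto. rewrite IHl; auto. Qed.

Lemma sumL_ext {X} (l : list X) f g : (forall x, f x = g x) -> sumL l f = sumL l g.
Proof. intros; apply sumL_ext_in; auto. Qed.

Lemma sumL_le {X} (l : list X) f g : (forall x, In x l -> f x <= g x) -> sumL l f <= sumL l g.
Proof. induction l; simpl; intros H; [lra|]. pose proof (H a (or_introl eq_refl)).
 assert (sumL l f <= sumL l g) by (apply IHl; auto). lra. Qed.

Lemma sumL_plus {X} (l : list X) f g : sumL l (fun x => f x + g x) = sumL l f + sumL l g.
Proof. induction l; simpl; [lra|rewrite IHl; lra]. Qed.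

Lemma sumL_minus {X} (l : list X) f g : sumL l (fun x => f x - g x) = sumL l f - sumL l g.
Proof. induction l; simpl; [lra|rewrite IHl; lra]. Qed.

Lemma sumL_scal {X} (l : list X) k f : sumL l (fun x => k * f x) = k * sumL l f.
Proof. induction l; simpl; [lra|rewrite IHl; lra]. Qed.

Lemma sumL_zero {X} (l : list X) f : (forall x, f x = 0) -> sumL l f = 0.
Proof. intros H; induction l; simpl; [lra|rewrite H, IHl; lra]. Qed.

Lemma sumL_const1 {X} (l : list X) : sumL l (fun _ => 1) = INR (length l).
Proof. induction l; simpl length; [simpl; lra|]. rewrite S_INR; simpl; rewrite IHl; lra. Qed.

Lemma sumL_swap {X Y} (l1 : list X) (l2 : list Y) (f : X -> Y -> R) :
  sumL l1 (fun x => sumL l2 (fun y => f x y)) = sumL l2 (fun y => sumL l1 (fun x => f x y)).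
Proof. induction l1; simpl.
 - rewrite sumL_zero; auto.
 - rewrite IHl1, <- sumL_plus. reflexivity. Qed.

Definition boxlist (N : nat) := list_prod (Zrange N) (Zrange N).

Lemma fold_sumL {X} (l : list X) f : fold_right Rplus 0 (map f l) = sumL l f.
Proof. induction l; simpl; [lra|rewrite IHl; lra]. Qed.

Lemma box_sum_L f N : box_sum f N = sumL (boxlist N) f.
Proof. unfold box_sum, boxlist. apply fold_sumL. Qed.

Lemma sumL_prod {X Y} (A : list X) (B : list Y) f :
  sumL (list_prod A B) f = sumL A (fun a => sumL B (fun b => f (a, b))).
Proof. induction A; simpl; [lra|]. rewrite sumL_app, sumL_map, IHA. reflexivity. Qed.

Lemma box_sum_eq f N : box_sum f N = sumL (Zrange N) (fun a => sumL (Zrange N) (fun b => f (a, b))).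
Proof. rewrite box_sum_L; unfold boxlist; apply sumL_prod. Qed.

Lemma box_sum_ext f g N : (forall v, f v = g v) -> box_sum f N = box_sum g N.
Proof. intros; rewrite !box_sum_L; apply sumL_ext; auto. Qed.
Lemma box_sum_le f g N : (forall v, f v <= g v) -> box_sum f N <= box_sum g N.
Proof. intros; rewrite !box_sum_L; apply sumL_le; auto. Qed.
Lemma box_sum_plus f g N : box_sum (fun v => f v + g v) N = box_sum f N + box_sum g N.
Proof. rewrite !box_sum_L; apply sumL_plus. Qed.
Lemma box_sum_minus f g N : box_sum (fun v => f v - g v) N = box_sum f N - box_sum g N.
Proof. rewrite !box_sum_L; apply sumL_minus. Qed.
Lemma box_sum_scal f k N : box_sum (fun v => k * f v) N = k * box_sum f N.
Proof. rewrite !box_sum_L; apply sumL_scal. Qed.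

Definition ZI (lo : Z) (len : nat) : list Z := map (fun i => (lo + Z.of_nat i)%Z) (seq 0 len).

Lemma Zrange_ZI N : Zrange N = ZI (- Z.of_nat N) (2 * N + 1).
Proof. unfold Zrange, ZI. apply map_ext. intros; lia. Qed.

Lemma ZI_right lo len g : sumL (ZI lo (S len)) g = sumL (ZI lo len) g + g (lo + Z.of_nat len)%Z.
Proof. unfold ZI. rewrite seq_S, map_app, sumL_app. simpl. lra. Qed.

Lemma ZI_left lo len g : sumL (ZI lo (S len)) g = g lo + sumL (ZI (lo + 1) len) g.
Proof. unfold ZI. simpl. rewrite Z.add_0_r. f_equal. rewrite <- seq_shift, !sumL_map.
 apply sumL_ext; intros; f_equal; lia. Qed.

Lemma ZI_shift lo len g c : sumL (ZI lo len) (fun k => g (k + c)%Z) = sumL (ZI (lo + c) len) g.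
Proof. unfold ZI. rewrite !sumL_map. apply sumL_ext; intros; f_equal; lia. Qed.

Lemma ZI_canon (S0 : nat) g : (forall k, (Z.of_nat S0 < Z.abs k)%Z -> g k = 0) ->
  forall len lo, (lo <= - Z.of_nat S0)%Z -> (Z.of_nat S0 <= lo + Z.of_nat len - 1)%Z ->
  sumL (ZI lo len) g = sumL (Zrange S0) g.
Proof. intros Hg len; induction len as [|len IH]; intros lo H1 H2.
 - simpl in H2; lia.
 - destruct (Z_lt_le_dec lo (- Z.of_nat S0)).
   + rewrite ZI_left, Hg by lia. rewrite IH by lia. lra.
   + destruct (Z_lt_le_dec (Z.of_nat S0) (lo + Z.of_nat len)).
     * rewrite ZI_right, (Hg (lo + Z.of_nat len)%Z) by lia. rewrite IH by lia. lra.
     * rewrite Zrange_ZI. replace lo with (- Z.of_nat S0)%Z by lia.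
       replace (S len) with (2 * S0 + 1)%nat by lia. reflexivity.
Qed.

Lemma support_1d (S0 M : nat) g : (forall k, (Z.of_nat S0 < Z.abs k)%Z -> g k = 0) -> (S0 <= M)%nat ->
  sumL (Zrange M) g = sumL (Zrange S0) g.
Proof. intros Hg HM. rewrite (Zrange_ZI M). apply ZI_canon; auto; lia. Qed.

Lemma shift_1d (S0 M : nat) g c : (forall k, (Z.of_nat S0 < Z.abs k)%Z -> g k = 0) ->
  (Z.of_nat S0 + Z.abs c <= Z.of_nat M)%Z ->
  sumL (Zrange M) (fun k => g (k + c)%Z) = sumL (Zrange M) g.
Proof. intros Hg HM. rewrite (Zrange_ZI M), ZI_shift.
 rewrite !(ZI_canon S0) by (auto; lia). reflexivity. Qed.

Definition inbox (S0 : nat) (v : Z2) : Prop := (Z.abs (fst v) <= Z.of_nat S0 /\ Z.abs (snd v) <= Z.of_nat S0)%Z.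

Lemma box_support (S0 M : nat) f : (forall v, ~ inbox S0 v -> f v = 0) -> (S0 <= M)%nat ->
  box_sum f M = box_sum f S0.
Proof. intros Hf HM. rewrite !box_sum_eq.
 rewrite (sumL_ext (Zrange M) _ (fun a => sumL (Zrange S0) (fun b => f (a, b)))).
 2:{ intros a. apply support_1d; auto. intros k Hk. apply Hf. unfold inbox; simpl; lia. }
 apply support_1d; auto. intros k Hk. apply sumL_zero. intros b. apply Hf. unfold inbox; simpl; lia.
Qed.

Lemma box_shift (S0 M : nat) f c : (forall v, ~ inbox S0 v -> f v = 0) ->
  (Z.of_nat S0 + Z.abs c <= Z.of_nat M)%Z ->
  box_sum (fun v => f (fst v, snd v + c)%Z) M = box_sum f M.
Proof. intros Hf HM. rewrite !box_sum_eq. apply sumL_ext. intros a. simpl.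
 apply (shift_1d S0 M (fun b => f (a, b))); auto.
 intros k Hk. apply Hf. unfold inbox; simpl; lia. Qed.

Definition Z2_eq_dec (u v : Z2) : {u = v} + {u <> v}.
Proof. decide equality; apply Z.eq_dec. Defined.
Definition dlt (y v : Z2) : R := if Z2_eq_dec v y then 1 else 0.

Lemma sumL_delta_notin y l : ~ In y l -> sumL l (dlt y) = 0.
Proof. induction l; simpl; intros H; [lra|]. unfold dlt at 1.
 destruct (Z2_eq_dec a y); [subst; tauto|]. rewrite IHl; [lra|tauto]. Qed.

Lemma sumL_delta_le y l : NoDup l -> sumL l (dlt y) <= 1.
Proof. induction l; simpl; intros H; [lra|]. inversion H; subst. unfold dlt at 1.
 destruct (Z2_eq_dec a y).
 - subst. rewrite sumL_delta_notin; auto; lra.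
 - specialize (IHl H3). lra. Qed.

Lemma sumL_delta_in y l : NoDup l -> In y l -> sumL l (dlt y) = 1.
Proof. induction l; simpl; intros H Hi; [tauto|]. inversion H; subst. unfold dlt at 1.
 destruct (Z2_eq_dec a y).
 - subst. rewrite sumL_delta_notin; auto; lra.
 - destruct Hi; [congruence|]. rewrite IHl; auto; lra. Qed.

Lemma NoDup_prod {X Y} (A : list X) (B : list Y) : NoDup A -> NoDup B -> NoDup (list_prod A B).
Proof. induction A; simpl; intros HA HB; [constructor|]. inversion HA; subst.
 apply NoDup_app.
 - apply NoDup_map_NoDup_ForallPairs; auto. intros x y _ _ E; congruence.
 - auto.
 - intros [x y] G1 G2. apply in_map_iff in G1. destruct G1 as [z [E _]]. inversion E; subst.
   apply in_prod_iff in G2. tauto.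
Qed.

Lemma NoDup_Zrange N : NoDup (Zrange N).
Proof. unfold Zrange. apply NoDup_map_NoDup_ForallPairs; [|apply seq_NoDup].
 intros x y _ _ E. lia. Qed.

Lemma NoDup_box N : NoDup (boxlist N).
Proof. apply NoDup_prod; apply NoDup_Zrange. Qed.

Lemma in_Zrange k N : (Z.abs k <= Z.of_nat N)%Z -> In k (Zrange N).
Proof. intros H. unfold Zrange. apply in_map_iff. exists (Z.to_nat (k + Z.of_nat N)).
 split; [lia|]. apply in_seq. lia. Qed.

Lemma box_delta_le y N : box_sum (dlt y) N <= 1.
Proof. rewrite box_sum_L. apply sumL_delta_le, NoDup_box. Qed.

Lemma box_delta_in y N : inbox N y -> box_sum (dlt y) N = 1.
Proof. intros H. rewrite box_sum_L. apply sumL_delta_in; [apply NoDup_box|].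
 destruct y as [a b]. unfold boxlist. apply in_prod_iff. unfold inbox in H; simpl in H.
 split; apply in_Zrange; lia. Qed.

Lemma box_sumL_swap {X} (l : list X) (f : X -> Z2 -> R) N :
  box_sum (fun v => sumL l (fun y => f y v)) N = sumL l (fun y => box_sum (f y) N).
Proof. rewrite box_sum_L. rewrite sumL_swap. apply sumL_ext. intros; rewrite box_sum_L; reflexivity. Qed.

Lemma cv_eventually_const (u : nat -> R) N0 L : (forall N, (N0 <= N)%nat -> u N = L) -> Un_cv u L.
Proof. intros H eps He. exists N0. intros n Hn. rewrite H by lia. unfold Rdist. rewrite Rminus_diag, Rabs_R0. lra. Qed.

Lemma cv_growing (u : nat -> R) N0 B : (forall N, (N0 <= N)%nat -> u N <= u (S N)) ->
  (forall N, u N <= B) -> exists L, Un_cv u L /\ forall N, (N0 <= N)%nat -> u N <= L.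
Proof. intros Hg Hb.
 set (v := fun k => u (N0 + k)%nat).
 assert (Gv : Un_growing v). { intros k. unfold v. rewrite <- plus_n_Sm. apply Hg. lia. }
 assert (Bv : has_ub v). { exists B. intros x [i ->]. apply Hb. }
 destruct (growing_cv v Gv Bv) as [L HL]. exists L. split.
 - intros eps He. destruct (HL eps He) as [K HK]. exists (N0 + K)%nat. intros n Hn.
   replace n with (N0 + (n - N0))%nat by lia. apply (HK (n - N0)%nat). lia.
 - intros N HN. replace N with (N0 + (N - N0))%nat by lia. apply (growing_ineq v L Gv HL).
Qed.

Definition gk (k : Z) : R := / (1 + IZR k * IZR k).

Lemma gk_pos k : 0 < gk k.
Proof. unfold gk. apply Rinv_0_lt_compat. pose proof (Rle_0_sqr (IZR k)); unfold Rsqr in *; lra. Qed.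

Lemma Zrange_S_sum N g : sumL (Zrange (S N)) g = g (- Z.of_nat (S N))%Z + sumL (Zrange N) g + g (Z.of_nat (S N)).
Proof. rewrite !Zrange_ZI. replace (2 * S N + 1)%nat with (S (S (2 * N + 1))) by lia.
 rewrite ZI_left, ZI_right. replace (- Z.of_nat (S N) + 1)%Z with (- Z.of_nat N)%Z by lia.
 replace (- Z.of_nat N + Z.of_nat (2 * N + 1))%Z with (Z.of_nat (S N)) by lia. lra. Qed.

Lemma sum_gk_bound N : sumL (Zrange N) gk <= 5 - 2 / (INR N + /2).
Proof. induction N.
 - simpl. unfold gk. simpl. replace (1 + 0 * 0) with 1 by ring. rewrite Rinv_1. replace (2 / (0 + /2)) with 4 by field. lra.
 - rewrite Zrange_S_sum. rewrite S_INR.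
   assert (E : forall z, IZR z * IZR z = IZR (Z.of_nat (S N)) * IZR (Z.of_nat (S N)) -> gk z = gk (Z.of_nat (S N))).
   { intros z Hz. unfold gk. rewrite Hz. reflexivity. }
   rewrite (E (- Z.of_nat (S N))%Z) by (rewrite opp_IZR; ring).
   change (gk (Z.of_nat (S N))) with (/(1 + IZR (Z.of_nat (S N)) * IZR (Z.of_nat (S N)))).
   rewrite <- INR_IZR_INZ, S_INR.
   pose proof (pos_INR N).
   assert (/ (1 + (INR N + 1) * (INR N + 1)) <= 1 / (INR N + /2) - 1/(INR N + 1 + /2)).
   { replace (1 / (INR N + /2) - 1 / (INR N + 1 + /2)) with (/ ((INR N + /2) * (INR N + 3/2))) by (field; lra).
     apply Rinv_le_contravar; nra. }
   unfold Rdiv in *. lra.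
Qed.

Lemma sum_gk_le3 N : sumL (Zrange N) gk <= 5.
Proof. pose proof (sum_gk_bound N). pose proof (pos_INR N).
 assert (0 < 2 / (INR N + /2)) by (apply Rdiv_lt_0_compat; lra). lra. Qed.

Lemma box_gg_bound N K0 : 0 <= K0 -> box_sum (fun v => K0 * (gk (fst v) * gk (snd v))) N <= 25 * K0.
Proof. intros HK. rewrite box_sum_scal, box_sum_eq. simpl.
 rewrite (sumL_ext _ _ (fun a => gk a * sumL (Zrange N) gk)) by (intros; apply sumL_scal).
 rewrite (sumL_ext _ _ (fun a => sumL (Zrange N) gk * gk a)) by (intros; ring).
 rewrite sumL_scal.
 assert (0 <= sumL (Zrange N) gk). { rewrite <- (sumL_zero (Zrange N) (fun _ => 0)) by auto.
   apply sumL_le. intros; left; apply gk_pos. }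
 pose proof (sum_gk_le3 N). assert (sumL (Zrange N) gk * sumL (Zrange N) gk <= 25) by nra. apply Rmult_le_compat_l with (r := K0) in H1; auto. lra. Qed.

Definition w0 : Z2 := (0%Z, 2%Z).
Definition X (lam : R) (v : Z2) : R := IZR (norm2 v) - lam.

Lemma CC_X lam v : CC lam v w0 = / X lam v * / X lam (addZ2 v w0).
Proof. reflexivity. Qed.

Lemma add_sub v : addZ2 (subZ2 v w0) w0 = v.
Proof. destruct v; unfold addZ2, subZ2, w0; simpl; f_equal; lia. Qed.
Lemma sub_add v : subZ2 (addZ2 v w0) w0 = v.
Proof. destruct v; unfold addZ2, subZ2, w0; simpl; f_equal; lia. Qed.

Lemma X_add lam a b : X lam (addZ2 (a, b) w0) = X lam (a, b) + 4 * IZR b + 4.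
Proof. unfold X, addZ2, norm2, w0; simpl. rewrite !plus_IZR, !mult_IZR, !plus_IZR. ring. Qed.
Lemma X_sub lam a b : X lam (subZ2 (a, b) w0) = X lam (a, b) - 4 * IZR b + 4.
Proof. unfold X, subZ2, norm2, w0; simpl. rewrite !plus_IZR, !mult_IZR, !minus_IZR. ring. Qed.
Lemma X_add2 lam a b : X lam (addZ2 (addZ2 (a, b) w0) w0) = X lam (a, b) + 8 * IZR b + 16.
Proof. unfold X, addZ2, norm2, w0; simpl. rewrite !plus_IZR, !mult_IZR, !plus_IZR. ring. Qed.
Lemma X_ab lam a b : X lam (a, b) = IZR a * IZR a + IZR b * IZR b - lam.
Proof. unfold X, norm2; simpl. rewrite plus_IZR, !mult_IZR. ring. Qed.

Lemma prod_neg x y : x * y < 0 -> (x < 0 /\ 0 < y) \/ (y < 0 /\ 0 < x).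
Proof. intros H. destruct (Rlt_le_dec x 0); destruct (Rlt_le_dec y 0); try nra. Qed.

Lemma inv_prod_neg x y : x <> 0 -> y <> 0 -> / x * / y < 0 -> x * y < 0.
Proof. intros Hx Hy H. rewrite <- Rinv_mult in H.
 destruct (Rlt_le_dec (x*y) 0); auto. destruct r.
 - pose proof (Rinv_0_lt_compat _ H0). lra.
 - exfalso. symmetry in H0. apply Rmult_integral in H0. tauto. Qed.

Lemma inv_prod_pos x y : 0 < x * y -> 0 < / x * / y.
Proof. intros H. rewrite <- Rinv_mult. apply Rinv_0_lt_compat; auto. Qed.

Lemma one_le_abs_IZR k : (k <> 0)%Z -> 1 <= Rabs (IZR k).
Proof. intros H. rewrite Rabs_Zabs. apply IZR_le. lia. Qed.


Lemma Sw_le_max (a b : R) : (if Rlt_dec (Rabs a) (Rabs b) then a else if Rlt_dec (Rabs b) (Rabs a) then b else Rmin a b) <= Rmax a b.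
Proof. destruct (Rlt_dec _ _). apply Rmax_l. destruct (Rlt_dec _ _). apply Rmax_r.
 pose proof (Rmin_l a b). pose proof (Rmax_l a b). lra. Qed.

Lemma Z_sq_split (a n0 : Z) : (0 < n0)%Z -> (a * a <= (n0 - 1) * (n0 - 1) \/ a = n0 \/ a = - n0 \/ (n0 + 1) * (n0 + 1) <= a * a)%Z.
Proof. intros H. destruct (Z_le_gt_dec (Z.abs a) (n0 - 1)).
 - left. nia.
 - destruct (Z.eq_dec (Z.abs a) n0).
   + destruct (Z_le_gt_dec 0 a); [right; left; lia| right; right; left; lia].
   + right; right; right. nia. Qed.

Lemma Zrange_in k N : In k (Zrange N) -> (Z.abs k <= Z.of_nat N)%Z.
Proof. unfold Zrange. intros H. apply in_map_iff in H. destruct H as [i [E Hi]]. apply in_seq in Hi. lia. Qed.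

Lemma boxlist_in v N : In v (boxlist N) -> inbox N v.
Proof. destruct v as [a b]. unfold boxlist. intros H. apply in_prod_iff in H. destruct H.
 unfold inbox; simpl; split; apply Zrange_in; auto. Qed.

Definition ind (N : nat) (v : Z2) : R :=
  if Z_le_dec (Z.abs (fst v)) (Z.of_nat N) then if Z_le_dec (Z.abs (snd v)) (Z.of_nat N) then 1 else 0 else 0.

Lemma box_growth f N : (forall v, ~ inbox N v -> 0 <= f v) -> box_sum f N <= box_sum f (S N).
Proof. intros Hf.
 assert (E : box_sum f (S N) = box_sum (fun v => ind N v * f v) (S N) + box_sum (fun v => (1 - ind N v) * f v) (S N)).
 { rewrite <- box_sum_plus. apply box_sum_ext. intros; ring. }
 rewrite (box_support N (S N) (fun v => ind N v * f v)) in E.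
 2:{ intros v Hv. unfold ind. destruct Z_le_dec; [destruct Z_le_dec|]; try ring. exfalso; apply Hv; split; auto. }
 2: lia.
 assert (E2 : box_sum (fun v => ind N v * f v) N = box_sum f N).
 { rewrite !box_sum_L. apply sumL_ext_in. intros v Hv. apply boxlist_in in Hv. destruct Hv.
   unfold ind. destruct Z_le_dec; [destruct Z_le_dec|]; try lia. ring. }
 assert (Z0 : box_sum (fun _ => 0) (S N) = 0) by (rewrite box_sum_L; apply sumL_zero; auto).
 assert (box_sum (fun _ => 0) (S N) <= box_sum (fun v => (1 - ind N v) * f v) (S N)).
 { apply box_sum_le. intros v. unfold ind. destruct Z_le_dec; [destruct Z_le_dec|].
     + lra.
     + assert (0 <= f v) by (apply Hf; intros [_ H]; lia). lra.
     + assert (0 <= f v) by (apply Hf; intros [H _]; lia). lra. }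
 lra.
Qed.

Section Main.
Variable n : Z.
Variable delta : R.
Hypothesis Hn : (0 < n)%Z.
Hypothesis Hd : 0 < Rabs delta < 1 / 10.
Let m := (n * n + 1)%Z.
Let lam := IZR m + delta.

Lemma X_low v : Rabs delta <= Rabs (X lam v).
Proof. unfold X, lam. replace (IZR (norm2 v) - (IZR m + delta)) with (IZR (norm2 v - m) - delta)
  by (rewrite minus_IZR; ring).
 destruct (Z.eq_dec (norm2 v - m) 0) as [E|E].
 - rewrite E. replace (IZR 0 - delta) with (- delta) by (simpl; ring). rewrite Rabs_Ropp. lra.
 - pose proof (one_le_abs_IZR _ E). pose proof (Rabs_triang_inv (IZR (norm2 v - m)) delta). lra.
Qed.

Lemma X_nonsing v : norm2 v <> m -> 9/10 <= Rabs (X lam v).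
Proof. intros Hv. unfold X, lam. replace (IZR (norm2 v) - (IZR m + delta)) with (IZR (norm2 v - m) - delta)
  by (rewrite minus_IZR; ring).
 assert (E : (norm2 v - m <> 0)%Z) by lia.
 pose proof (one_le_abs_IZR _ E). pose proof (Rabs_triang_inv (IZR (norm2 v - m)) delta). lra.
Qed.

Lemma X_nz v : X lam v <> 0.
Proof. intros E. pose proof (X_low v). rewrite E, Rabs_R0 in H. lra. Qed.

Lemma C_bound_gen v : Rabs (CC lam v w0) <= / Rabs delta * / Rabs delta.
Proof. rewrite CC_X, Rabs_mult, !Rabs_inv.
 pose proof (X_low v). pose proof (X_low (addZ2 v w0)).
 apply Rmult_le_compat; try (left; apply Rinv_0_lt_compat; lra); apply Rinv_le_contravar; lra. Qed.

Lemma C_bound_ns v : ~ (norm2 v = m /\ norm2 (addZ2 v w0) = m) -> Rabs (CC lam v w0) <= 2 / Rabs delta.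
Proof. intros H. rewrite CC_X, Rabs_mult, !Rabs_inv.
 pose proof (X_low v). pose proof (X_low (addZ2 v w0)).
 assert (forall x y, Rabs delta <= x -> 9/10 <= y -> / x * / y <= 2 / Rabs delta).
 { intros x y Hx Hy. assert (/ x <= / Rabs delta) by (apply Rinv_le_contravar; lra).
   assert (/ y <= 10/9) by (replace (10/9) with (/ (9/10)) by field; apply Rinv_le_contravar; lra).
   assert (0 < / x) by (apply Rinv_0_lt_compat; lra). assert (0 < / y) by (apply Rinv_0_lt_compat; lra).
   assert (0 < / Rabs delta) by (apply Rinv_0_lt_compat; lra). unfold Rdiv. nra. }
 destruct (Z.eq_dec (norm2 v) m) as [E|E].
 - assert (E2 : norm2 (addZ2 v w0) <> m) by tauto. pose proof (X_nonsing _ E2).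
   apply H2; auto.
 - pose proof (X_nonsing _ E). rewrite Rmult_comm. apply H2; auto.
Qed.


Variable RR : R.
Hypothesis HR : RR = sqrt lam.
Hypothesis HR0 : 256 <= RR.

Lemma IZR_m : IZR m = IZR n * IZR n + 1.
Proof. unfold m. rewrite plus_IZR, mult_IZR. reflexivity. Qed.

Lemma lam_pos : 0 < lam.
Proof. unfold lam. rewrite IZR_m. pose proof (Rle_0_sqr (IZR n)). unfold Rsqr in H.
 destruct (Rle_dec 0 delta); [rewrite Rabs_right in Hd; lra|rewrite Rabs_left in Hd; lra]. Qed.

Lemma delta_bnd : -1/10 < delta < 1/10.
Proof. destruct (Rle_dec 0 delta); [rewrite Rabs_right in Hd; lra|rewrite Rabs_left in Hd; lra]. Qed.

Lemma RR_sq : RR * RR = lam.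
Proof. rewrite HR. apply sqrt_sqrt. left; apply lam_pos. Qed.

Lemma RR_le_n : RR <= IZR n + 1.
Proof. pose proof RR_sq. pose proof delta_bnd. unfold lam in H; rewrite IZR_m in H.
 assert (1 <= IZR n) by (apply IZR_le; lia). nra. Qed.

Lemma sRR : sqrt RR * sqrt RR = RR /\ 16 <= sqrt RR.
Proof. split. apply sqrt_sqrt; lra. replace 16 with (sqrt (16 * 16)) by (apply sqrt_square; lra).
 apply sqrt_le_1; lra. Qed.

Lemma dot_abs a b : Rabs (IZR (dotZ2 (a, b) w0)) = 2 * IZR (Z.abs b).
Proof. unfold dotZ2, w0; simpl. rewrite Rabs_Zabs. replace (Z.abs (a * 0 + b * 2)) with (2 * Z.abs b)%Z by lia.
 rewrite mult_IZR. reflexivity. Qed.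

Lemma V2_b v : inV2 lam m RR w0 v -> (4 <= Z.abs (snd v))%Z.
Proof. destruct v as [a b]; simpl. intros [_ [_ [_ [H _]]]]. rewrite dot_abs in H. pose proof sRR.
 assert (4 <= IZR (Z.abs b)) by lra. apply le_IZR in H1. lia. Qed.

Lemma V2_neg v : inV2 lam m RR w0 v -> X lam v * X lam (addZ2 v w0) < 0.
Proof. intros [H _]. rewrite CC_X in H. apply inv_prod_neg; auto using X_nz. Qed.

Lemma V2_nbr a b : inV2 lam m RR w0 (a, b) ->
  0 < CC lam (subZ2 (a, b) w0) w0 /\ 0 < CC lam (addZ2 (a, b) w0) w0.
Proof. intros H. pose proof (V2_b _ H) as Hb. simpl in Hb. pose proof (V2_neg _ H) as Hn2.
 rewrite !CC_X, add_sub. rewrite X_sub, X_add2. rewrite X_add in *.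
 destruct (Z_le_gt_dec 0 b).
 - assert (4 <= IZR b) by (apply IZR_le; lia).
   apply prod_neg in Hn2. split; apply inv_prod_pos; nra.
 - assert (IZR b <= -4) by (apply IZR_le; lia).
   apply prod_neg in Hn2. split; apply inv_prod_pos; nra.
Qed.

Lemma V2_not_both a b : inV2 lam m RR w0 (subZ2 (a, b) w0) -> inV2 lam m RR w0 (addZ2 (a, b) w0) -> False.
Proof. intros H1 H2.
 pose proof (V2_b _ H1) as H1'. pose proof (V2_b _ H2) as H2'. simpl in H1', H2'.
 apply V2_neg in H1. apply V2_neg in H2. rewrite add_sub in H1.
 rewrite X_sub in H1. rewrite X_add2, X_add in H2.
 apply prod_neg in H1. apply prod_neg in H2.
 destruct (Z_le_gt_dec 0 b).
 - assert (6 <= IZR b) by (apply IZR_le; lia). nra.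
 - assert (IZR b <= -6) by (apply IZR_le; lia). nra.
Qed.


Definition Tup (v : Z2) : R :=
  if inV2_dec lam m RR w0 v then
    (if Rle_dec (CC lam (subZ2 v w0) w0) (CC lam (addZ2 v w0) w0) then CC lam (addZ2 v w0) w0 else 0)
  else 0.
Definition Tdn (v : Z2) : R :=
  if inV2_dec lam m RR w0 v then
    (if Rle_dec (CC lam (subZ2 v w0) w0) (CC lam (addZ2 v w0) w0) then 0 else CC lam (subZ2 v w0) w0)
  else 0.
Definition Cp (v : Z2) : R := CC lam v w0 + Tup v + Tdn v - Tup (subZ2 v w0) - Tdn (addZ2 v w0).

Definition p1 : Z2 := (n, (-1)%Z).
Definition p2 : Z2 := ((-n)%Z, (-1)%Z).
Definition L1 : list Z2 := filter (fun p : Z2 => Z.eqb (norm2 p) m)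
                 (list_prod (Zrange (Z.abs_nat m)) (Zrange (Z.abs_nat m))).
Definition L3 : list Z2 := map (fun b => (n, b)) [(-3)%Z; (-2)%Z; (-1)%Z; 0%Z; 1%Z] ++
                           map (fun b => ((-n)%Z, b)) [(-3)%Z; (-2)%Z; (-1)%Z; 0%Z; 1%Z].
Definition Lall : list Z2 := L1 ++ map (fun p => subZ2 p w0) L1 ++ L3.
Definition cnt (v : Z2) : R := sumL Lall (fun y => dlt y v).
Definition Q (v : Z2) : R := / (delta * delta) * (dlt p1 v + dlt p2 v) - 2 / Rabs delta * cnt v.

Lemma cnt_nonneg v : 0 <= cnt v.
Proof. unfold cnt. rewrite <- (sumL_zero Lall (fun _ => 0)) by auto. apply sumL_le.
 intros; unfold dlt; destruct Z2_eq_dec; lra. Qed.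

Lemma cnt_in v : In v Lall -> 1 <= cnt v.
Proof. unfold cnt. generalize Lall. intros l; induction l; simpl; [tauto|]. intros [E|H].
 - subst. unfold dlt at 1. destruct Z2_eq_dec; [|congruence].
   assert (0 <= sumL l (fun y => dlt y v)).
   { rewrite <- (sumL_zero l (fun _ => 0)) by auto. apply sumL_le. intros; unfold dlt; destruct Z2_eq_dec; lra. }
   lra.
 - specialize (IHl H). unfold dlt at 1. destruct Z2_eq_dec; lra. Qed.

Lemma dlt_ne y v : v <> y -> dlt y v = 0.
Proof. intros; unfold dlt; destruct Z2_eq_dec; [congruence|reflexivity]. Qed.

Lemma Q_nonspec v : v <> p1 -> v <> p2 -> Q v <= 0.
Proof. intros H1 H2. unfold Q. rewrite !dlt_ne by auto. pose proof (cnt_nonneg v).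
 assert (0 < 2 / Rabs delta) by (apply Rdiv_lt_0_compat; lra). nra. Qed.

Lemma Q_nonspec_in v : v <> p1 -> v <> p2 -> In v Lall -> Q v <= - (2 / Rabs delta).
Proof. intros H1 H2 H3. unfold Q. rewrite !dlt_ne by auto. pose proof (cnt_in v H3).
 assert (0 < 2 / Rabs delta) by (apply Rdiv_lt_0_compat; lra). nra. Qed.

Lemma p1_ne_p2 : p1 <> p2.
Proof. unfold p1, p2; intros E; inversion E; lia. Qed.

Lemma Q_spec v : v = p1 \/ v = p2 -> Q v <= / (delta * delta).
Proof. intros H. unfold Q. pose proof (cnt_nonneg v).
 assert (0 < 2 / Rabs delta) by (apply Rdiv_lt_0_compat; lra).
 assert (dlt p1 v + dlt p2 v = 1).
 { pose proof p1_ne_p2. destruct H as [->| ->]; unfold dlt; destruct Z2_eq_dec; destruct Z2_eq_dec; try congruence; lra. }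
 rewrite H2. nra. Qed.

Lemma C_spec v : v = p1 \/ v = p2 -> CC lam v w0 = / (delta * delta).
Proof. intros H. rewrite CC_X. assert (X lam v = - delta /\ X lam (addZ2 v w0) = - delta) as [E1 E2].
 { destruct H as [->| ->]; unfold p1, p2; rewrite X_add, !X_ab; unfold lam; rewrite IZR_m;
   rewrite ?opp_IZR; simpl; split; ring. }
 rewrite E1, E2, <- Rinv_mult. f_equal. ring. Qed.

Lemma both_sing v : norm2 v = m -> norm2 (addZ2 v w0) = m -> v = p1 \/ v = p2.
Proof. destruct v as [a b]. unfold norm2, addZ2, w0, p1, p2, m; simpl. intros H1 H2.
 assert (b = -1)%Z by nia. subst. assert ((a - n) * (a + n) = 0)%Z by nia.
 apply Z.mul_eq_0 in H. destruct H; [left|right]; f_equal; lia. Qed.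

Lemma in_L1 v : norm2 v = m -> In v L1.
Proof. intros H. unfold L1. apply filter_In. split; [|apply Z.eqb_eq; auto].
 destruct v as [a b]. apply in_prod_iff. unfold norm2 in H; simpl in H.
 assert (Z.of_nat (Z.abs_nat m) = m) by (unfold m; lia).
 split; apply in_Zrange; rewrite H0; nia. Qed.


Lemma small_b_int (b : Z) : IZR b * IZR b < 2 \/ (IZR b + 2) * (IZR b + 2) < 2 -> (-3 <= b <= 1)%Z.
Proof. intros [H|H].
 - rewrite <- mult_IZR in H. apply lt_IZR in H. nia.
 - replace (IZR b + 2) with (IZR (b + 2)) in H by (rewrite plus_IZR; reflexivity).
   rewrite <- mult_IZR in H. apply lt_IZR in H. nia. Qed.

Lemma in_L3 a b : (a = n \/ a = - n)%Z -> (-3 <= b <= 1)%Z -> In (a, b) Lall.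
Proof. intros Ha Hb. unfold Lall. apply in_app_iff; right; apply in_app_iff; right.
 unfold L3. assert (b = -3 \/ b = -2 \/ b = -1 \/ b = 0 \/ b = 1)%Z by lia.
 destruct Ha; subst; simpl; intuition (subst; auto 12). Qed.

Lemma classify v : CC lam v w0 < 0 -> ~ inV2 lam m RR w0 v -> In v Lall.
Proof. intros HC HV. pose proof (inv_prod_neg _ _ (X_nz v) (X_nz _) HC) as HX.
 destruct (Z.eq_dec (norm2 v) m) as [E1|E1].
 { unfold Lall. apply in_app_iff; left. apply in_L1; auto. }
 destruct (Z.eq_dec (norm2 (addZ2 v w0)) m) as [E2|E2].
 { unfold Lall. apply in_app_iff; right; apply in_app_iff; left. apply in_map_iff.
   exists (addZ2 v w0). split; [apply sub_add|apply in_L1; auto]. }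
 assert (HD : ~ (sqrt RR / 2 <= Rabs (IZR (dotZ2 v w0)) <= 3 * RR)).
 { intros HD. apply HV. unfold inV2. tauto. }
 destruct v as [a b]. rewrite dot_abs in HD. rewrite X_add, X_ab in HX.
 apply prod_neg in HX. unfold lam in HX. rewrite IZR_m in HX.
 pose proof sRR as [Hs1 Hs2]. pose proof RR_sq as Hsq. unfold lam in Hsq. rewrite IZR_m in Hsq.
 pose proof RR_le_n. pose proof delta_bnd.
 assert (HT : exists T, T = IZR (Z.abs b) /\ 0 <= T /\ (T = IZR b \/ T = - IZR b)).
 { exists (IZR (Z.abs b)). split; auto. destruct (Z_le_gt_dec 0 b).
   - rewrite Z.abs_eq by lia. split; [apply IZR_le; lia|left; auto].
   - rewrite Z.abs_neq by lia. rewrite opp_IZR. split; [assert (IZR b < 0) by (apply IZR_lt; lia); lra|right; auto]. }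
 destruct HT as [T [HT1 [HT2 HT3]]]. rewrite <- HT1 in HD.
 assert (HN : 1 <= IZR n) by (apply IZR_le; lia).
 assert (Hsm : 2 * T < sqrt RR / 2 \/ 3 * RR < 2 * T) by (destruct (Rle_dec (sqrt RR / 2) (2*T)); [|lra]; destruct (Rle_dec (2*T) (3*RR)); [tauto|lra]).
 destruct Hsm as [Hsm|Hbig].
 - destruct (Z_sq_split a n Hn) as [Ha|[Ha|[Ha|Ha]]].
   + apply IZR_le in Ha. rewrite !mult_IZR, !minus_IZR in Ha.
     assert (IZR b * IZR b <= (sqrt RR / 4 + 2) * (sqrt RR / 4 + 2)) by (destruct HT3; nra).
     assert ((IZR b + 2) * (IZR b + 2) <= (sqrt RR / 4 + 2) * (sqrt RR / 4 + 2)) by (destruct HT3; nra).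
     assert (sqrt RR <= RR / 8 + 2) by nra.
     exfalso. destruct HX; nra.
   + subst a. apply in_L3; auto. apply small_b_int. destruct HX; [left|right]; nra.
   + subst a. apply in_L3; auto. apply small_b_int. rewrite opp_IZR in HX. destruct HX; [left|right]; nra.
   + apply IZR_le in Ha. rewrite !mult_IZR, !plus_IZR in Ha. exfalso.
     assert (0 <= IZR b * IZR b) by nra. assert (0 <= (IZR b + 2) * (IZR b + 2)) by nra. destruct HX; nra.
 - exfalso. assert (0 <= IZR a * IZR a) by nra. destruct HT3; destruct HX; nra.
Qed.


Lemma notV2_pos v : 0 < CC lam v w0 -> ~ inV2 lam m RR w0 v.
Proof. intros H [H1 _]. lra. Qed.

Lemma V2_not_spec v : inV2 lam m RR w0 v -> v <> p1 /\ v <> p2.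
Proof. intros H. apply V2_b in H. unfold p1, p2; split; intros E; subst; simpl in H; lia. Qed.

Lemma pointwise v : SwV2 lam m RR w0 v + Q v <= Cp v.
Proof. unfold Cp, SwV2, Tup at 1, Tdn at 1.
 destruct (inV2_dec lam m RR w0 v) as [HV|HV].
 - destruct v as [a b].
   destruct (V2_nbr a b HV) as [Hs Ha].
   assert (Tup (subZ2 (a, b) w0) = 0).
   { unfold Tup. destruct inV2_dec as [G|G]; auto. exfalso. destruct G as [G _].
     destruct HV as [HV _]. lra. }
   assert (Tdn (addZ2 (a, b) w0) = 0).
   { unfold Tdn. destruct inV2_dec as [G|G]; auto. exfalso. destruct G as [G _]. lra. }
   rewrite H, H0. destruct (V2_not_spec _ HV). pose proof (Q_nonspec _ H1 H2).
   pose proof (Sw_le_max (CC lam (subZ2 (a, b) w0) w0 + CC lam (a, b) w0) (CC lam (a, b) w0 + CC lam (addZ2 (a, b) w0) w0)).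
   unfold Sw. cbv zeta.
   destruct (Rle_dec _ _).
   + assert (Rmax (CC lam (subZ2 (a, b) w0) w0 + CC lam (a, b) w0) (CC lam (a, b) w0 + CC lam (addZ2 (a, b) w0) w0) <= CC lam (a, b) w0 + CC lam (addZ2 (a, b) w0) w0) by (apply Rmax_lub; lra). lra.
   + assert (Rmax (CC lam (subZ2 (a, b) w0) w0 + CC lam (a, b) w0) (CC lam (a, b) w0 + CC lam (addZ2 (a, b) w0) w0) <= CC lam (a, b) w0 + CC lam (subZ2 (a, b) w0) w0) by (apply Rmax_lub; lra). lra.
 - destruct v as [a b].
   destruct (inV2_dec lam m RR w0 (subZ2 (a, b) w0)) as [Hm|Hm].
   + assert (HP : ~ inV2 lam m RR w0 (addZ2 (a, b) w0)) by (intro; eapply V2_not_both; eauto).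
     assert (Tdn (addZ2 (a, b) w0) = 0) by (unfold Tdn; destruct inV2_dec; tauto).
     destruct (V2_nbr _ _ (eq_ind _ (fun u => inV2 lam m RR w0 u) Hm (fst (subZ2 (a,b) w0), snd (subZ2 (a,b) w0)) eq_refl)) as [_ Hpos].
     simpl in Hpos. replace (addZ2 (a - 0, b - 2)%Z w0) with (a, b) in Hpos by (unfold addZ2, w0; simpl; f_equal; lia).
     assert (Hns : (a, b) <> p1 /\ (a, b) <> p2).
     { pose proof (V2_b _ Hm) as Hb. unfold p1, p2; simpl in Hb; split; intros E; inversion E; subst; lia. }
     pose proof (Q_nonspec _ (proj1 Hns) (proj2 Hns)).
     unfold Tup. destruct inV2_dec; [|tauto]. rewrite add_sub. destruct Rle_dec; lra.
   + assert (Tup (subZ2 (a, b) w0) = 0) by (unfold Tup; destruct inV2_dec; tauto).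
     destruct (inV2_dec lam m RR w0 (addZ2 (a, b) w0)) as [Hp|Hp].
     * destruct (V2_nbr _ _ (eq_ind _ (fun u => inV2 lam m RR w0 u) Hp (fst (addZ2 (a,b) w0), snd (addZ2 (a,b) w0)) eq_refl)) as [Hpos _].
       simpl in Hpos. replace (subZ2 (a + 0, b + 2)%Z w0) with (a, b) in Hpos by (unfold subZ2, w0; simpl; f_equal; lia).
       assert (Hns : (a, b) <> p1 /\ (a, b) <> p2).
       { pose proof (V2_b _ Hp) as Hb. unfold p1, p2; simpl in Hb; split; intros E; inversion E; subst; lia. }
       pose proof (Q_nonspec _ (proj1 Hns) (proj2 Hns)).
       unfold Tdn. destruct inV2_dec; [|tauto]. rewrite sub_add. destruct Rle_dec; lra.
     * assert (Tdn (addZ2 (a, b) w0) = 0) by (unfold Tdn; destruct inV2_dec; tauto).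
       rewrite H, H0.
       destruct (Z2_eq_dec (a, b) p1) as [E|E].
       { pose proof (Q_spec (a, b) (or_introl E)). rewrite (C_spec _ (or_introl E)). lra. }
       destruct (Z2_eq_dec (a, b) p2) as [E'|E'].
       { pose proof (Q_spec (a, b) (or_intror E')). rewrite (C_spec _ (or_intror E')). lra. }
       destruct (Rlt_le_dec (CC lam (a, b) w0) 0) as [Hn2|Hn2].
       { pose proof (classify _ Hn2 HV). pose proof (Q_nonspec_in _ E E' H1).
         assert (~ (norm2 (a, b) = m /\ norm2 (addZ2 (a, b) w0) = m)).
         { intros [F1 F2]. destruct (both_sing _ F1 F2); tauto. }
         pose proof (C_bound_ns _ H3). pose proof (Rle_abs (- CC lam (a, b) w0)). rewrite Rabs_Ropp in H5. lra. }
       pose proof (Q_nonspec _ E E'). lra.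
Qed.


Lemma abs_T (b : Z) : exists T, T = IZR (Z.abs b) /\ 0 <= T /\ (T = IZR b \/ T = - IZR b).
Proof. exists (IZR (Z.abs b)). split; auto. destruct (Z_le_gt_dec 0 b).
   - rewrite Z.abs_eq by lia. split; [apply IZR_le; lia|left; auto].
   - rewrite Z.abs_neq by lia. rewrite opp_IZR. split; [assert (IZR b < 0) by (apply IZR_lt; lia); lra|right; auto]. Qed.

Lemma negC_box (S0 : nat) v : RR + 2 <= IZR (Z.of_nat S0) -> CC lam v w0 < 0 -> inbox S0 v.
Proof. intros HS HC. pose proof (inv_prod_neg _ _ (X_nz v) (X_nz _) HC) as HX.
 destruct v as [a b]. rewrite X_add, X_ab in HX. apply prod_neg in HX. rewrite <- RR_sq in HX.
 destruct (abs_T a) as [Ta [Ha1 [Ha2 Ha3]]]. destruct (abs_T b) as [Tb [Hb1 [Hb2 Hb3]]].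
 assert (Ta <= RR + 2 /\ Tb <= RR + 2) as [H1 H2].
 { pose proof (Rle_0_sqr (IZR a)). pose proof (Rle_0_sqr (IZR b)). pose proof (Rle_0_sqr (IZR b + 2)). unfold Rsqr in *.
   pose proof (Rle_refl 256). 
   assert (HA : IZR a * IZR a < RR * RR) by (destruct HX; lra).
   assert (HB : IZR b * IZR b < RR * RR \/ (IZR b + 2) * (IZR b + 2) < RR * RR) by (destruct HX; [left|right]; lra).
   assert (HRp : 0 < RR) by lra.
   split.
   - assert (Ta * Ta < RR * RR) by (destruct Ha3; subst Ta; nra). nra.
   - destruct HB as [HB|HB].
     + assert (Tb * Tb < RR * RR) by (destruct Hb3; subst Tb; nra). nra.
     + assert (- RR < IZR b + 2 < RR) by (split; nra). destruct Hb3; lra. }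
 unfold inbox; simpl. split; apply le_IZR; lra.
Qed.

Lemma RR_le_lam : RR <= lam.
Proof. pose proof RR_sq. nra. Qed.

Lemma exists_S1 : exists S1 : nat, lam + 6 <= IZR (Z.of_nat S1).
Proof. destruct (archimed lam) as [H1 _]. pose proof lam_pos.
 assert (0 < IZR (up lam)) by lra. apply lt_IZR in H0.
 exists (Z.to_nat (up lam) + 6)%nat. rewrite Nat2Z.inj_add, Z2Nat.id by lia. rewrite plus_IZR. simpl. lra. Qed.

Definition K0 := 32 + (4 * lam + 17) * (4 * lam + 17) * (/ Rabs delta * / Rabs delta).

Lemma C_upper v : CC lam v w0 <= K0 * (gk (fst v) * gk (snd v)).
Proof. destruct v as [a b]. simpl. unfold gk.
 set (A := IZR a). set (B := IZR b).
 assert (HP : 0 < (1 + A * A) * (1 + B * B)) by (apply Rmult_lt_0_compat; nra).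
 rewrite <- Rinv_mult.
 assert (D0 : 0 < / Rabs delta * / Rabs delta) by (apply Rmult_lt_0_compat; apply Rinv_0_lt_compat; lra).
 cut (CC lam (a, b) w0 * ((1 + A * A) * (1 + B * B)) <= K0).
 { intros H. apply (Rmult_le_reg_r ((1 + A * A) * (1 + B * B))); auto.
   rewrite Rmult_assoc, Rinv_l by lra. lra. }
 pose proof lam_pos.
 destruct (Rle_dec (A * A + B * B) (4 * lam + 16)) as [Hs|Hs].
 - pose proof (C_bound_gen (a, b)). pose proof (Rle_abs (CC lam (a, b) w0)).
   assert ((1 + A * A) * (1 + B * B) <= (4 * lam + 17) * (4 * lam + 17)) by nra.
   unfold K0. nra.
 - rewrite CC_X, X_add, X_ab. fold A B.
   set (x1 := A * A + B * B - lam). set (x2 := x1 + 4 * B + 4).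
   assert (Hx1 : 3 * (A * A + B * B) / 4 <= x1) by (unfold x1; lra).
   assert (Hx2 : (A * A + B * B) / 4 <= x2) by (unfold x2, x1; nra).
   assert (Hp : 0 < x1 * x2) by nra.
   rewrite <- Rinv_mult.
   assert ((1 + A * A) * (1 + B * B) <= 6 * (x1 * x2)) by nra.
   assert (/ (x1 * x2) * ((1 + A * A) * (1 + B * B)) <= 6).
   { apply (Rmult_le_reg_l (x1 * x2)); auto. rewrite <- Rmult_assoc, Rinv_r by lra. lra. }
   unfold K0. nra.
Qed.


Hypothesis Hr2 : (r2 m <= 32)%nat.

Lemma main_sec : exists Lsum LV2 : R,
  lattice_sum_is (fun v => CC lam v w0) Lsum /\
  lattice_sum_is (SwV2 lam m RR w0) LV2 /\
  Lsum >= 2 / (delta ^ 2) + (- (148 / Rabs delta)) + LV2.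
Proof.
 destruct exists_S1 as [S1 HS1]. pose proof RR_le_lam as HRl.
 set (NN := (S1 + 4)%nat).
 assert (Hbox : forall v, CC lam v w0 < 0 -> inbox S1 v) by (intros; apply negC_box; auto; lra).
 assert (HV2box : forall v, inV2 lam m RR w0 v -> inbox S1 v) by (intros v [H _]; auto).
 set (u := box_sum (fun v => CC lam v w0)).
 assert (Hgrow : forall N, (S1 <= N)%nat -> u N <= u (S N)).
 { intros N HN. apply box_growth. intros v Hv. destruct (Rlt_le_dec (CC lam v w0) 0) as [H|H]; auto.
   exfalso. apply Hv. apply Hbox in H. destruct H; split; lia. }
 assert (Hub : forall N, u N <= 25 * K0).
 { intros N. unfold u. eapply Rle_trans; [apply box_sum_le; intros v; apply C_upper|].
   apply box_gg_bound. unfold K0. pose proof lam_pos.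
   assert (0 < / Rabs delta * / Rabs delta) by (apply Rmult_lt_0_compat; apply Rinv_0_lt_compat; lra). nra. }
 destruct (cv_growing u S1 _ Hgrow Hub) as [Lsum [HLcv HLge]].
 set (LV2 := box_sum (SwV2 lam m RR w0) S1).
 assert (HSsupp : forall v, ~ inbox S1 v -> SwV2 lam m RR w0 v = 0).
 { intros v Hv. unfold SwV2. destruct inV2_dec; auto. exfalso; apply Hv; auto. }
 assert (HLV2 : lattice_sum_is (SwV2 lam m RR w0) LV2).
 { apply (cv_eventually_const _ S1). intros N HN. unfold LV2. apply box_support; auto. }
 exists Lsum, LV2. split; [exact HLcv|]. split; [exact HLV2|].
 assert (HTup : forall v, ~ inbox S1 v -> Tup v = 0).
 { intros v Hv. unfold Tup. destruct inV2_dec; auto. exfalso; apply Hv; auto. }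
 assert (HTdn : forall v, ~ inbox S1 v -> Tdn v = 0).
 { intros v Hv. unfold Tdn. destruct inV2_dec; auto. exfalso; apply Hv; auto. }
 assert (T1 : box_sum (fun v => Tup v - Tup (subZ2 v w0)) NN = 0).
 { rewrite box_sum_minus.
   rewrite (box_sum_ext (fun v => Tup (subZ2 v w0)) (fun v => Tup (fst v, snd v + (-2))%Z)).
   2:{ intros [a b]; unfold subZ2, w0; simpl; f_equal; f_equal; lia. }
   rewrite (box_shift S1 NN Tup (-2)%Z) by (auto; unfold NN; lia). ring. }
 assert (T2 : box_sum (fun v => Tdn v - Tdn (addZ2 v w0)) NN = 0).
 { rewrite box_sum_minus.
   rewrite (box_sum_ext (fun v => Tdn (addZ2 v w0)) (fun v => Tdn (fst v, snd v + 2)%Z)).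
   2:{ intros [a b]; unfold addZ2, w0; simpl; f_equal; f_equal; lia. }
   rewrite (box_shift S1 NN Tdn 2%Z) by (auto; unfold NN; lia). ring. }
 assert (HuCp : u NN = box_sum Cp NN).
 { unfold u. rewrite <- (Rplus_0_r (box_sum (fun v => CC lam v w0) NN)), <- T1 at 1.
   rewrite <- (Rplus_0_r (_ + _)), <- T2. rewrite <- !box_sum_plus. apply box_sum_ext.
   intros v; unfold Cp; ring. }
 assert (HCpge : box_sum (fun v => SwV2 lam m RR w0 v + Q v) NN <= box_sum Cp NN)
   by (apply box_sum_le; apply pointwise).
 rewrite box_sum_plus in HCpge.
 assert (HLV2eq : box_sum (SwV2 lam m RR w0) NN = LV2) by (unfold LV2; apply box_support; auto; unfold NN; lia).
 assert (HQ : 2 / (delta ^ 2) - 148 / Rabs delta <= box_sum Q NN).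
 { unfold Q. rewrite box_sum_minus, box_sum_scal, box_sum_scal, box_sum_plus.
   assert (Hn1 : (IZR n < RR)).
   { pose proof RR_sq. unfold lam in H; rewrite IZR_m in H. pose proof delta_bnd. nra. }
   assert (HnZ : (n <= Z.of_nat NN)%Z).
   { apply le_IZR. unfold NN. rewrite Nat2Z.inj_add, plus_IZR. simpl. lra. }
   rewrite !box_delta_in by (unfold inbox, p1, p2; simpl; lia).
   unfold cnt. rewrite box_sumL_swap.
   assert (sumL Lall (fun y => box_sum (dlt y) NN) <= 74).
   { eapply Rle_trans; [apply sumL_le; intros; apply box_delta_le|].
     rewrite sumL_const1. unfold Lall. rewrite !app_length, map_length.
     assert (length L3 = 10%nat) by reflexivity. assert (length L1 = r2 m) by reflexivity.
     rewrite H, H0. apply le_INR in Hr2. rewrite !plus_INR. simpl in Hr2 |- *. lra. }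
   assert (0 < 2 / Rabs delta) by (apply Rdiv_lt_0_compat; lra).
   assert (Edd : 2 / delta ^ 2 = / (delta * delta) * (1 + 1)).
   { assert (delta <> 0) by (intro E; rewrite E, Rabs_R0 in Hd; lra). field; auto. }
   rewrite Edd. assert (2 / Rabs delta * sumL Lall (fun y => box_sum (dlt y) NN) <= 2 / Rabs delta * 74) by nra.
   unfold Rdiv in *. lra. }
 pose proof (HLge NN ltac:(unfold NN; lia)). fold u in H. lra.
Qed.

End Main.

Theorem corollary5p3 :
  exists K R0 : R,
  forall (n : Z) (delta : R),
    (0 < n)%Z ->
    (r2 (n * n + 1)%Z <= 32)%nat ->
    0 < Rabs delta < 1 / 10 ->
    let m := (n * n + 1)%Z in
    let lam := IZR m + delta in
    let RR := sqrt lam in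
    let w : Z2 := (0%Z, 2%Z) in
    R0 <= RR ->
    exists (Lsum LV2 E : R),
      lattice_sum_is (fun v => CC lam v w) Lsum /\
      lattice_sum_is (SwV2 lam m RR w) LV2 /\
      Rabs E <= K / Rabs delta /\
      Lsum >= 2 / (delta ^ 2) + E + LV2.
Proof.
  exists 148, 256. intros n delta Hn Hr2 Hd m lam RR w HR.
  destruct (main_sec n delta Hn Hd RR eq_refl HR Hr2) as [Lsum [LV2 [H1 [H2 H3]]]].
  exists Lsum, LV2, (- (148 / Rabs delta)). split; [exact H1|]. split; [exact H2|]. split; [|exact H3].
  rewrite Rabs_Ropp, Rabs_right; [lra|]. left; apply Rdiv_lt_0_compat; lra.
Qed.
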